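(* Let $X$ be a uniformly convex and uniformly smooth Banach space, $x\in X$, and $(x_k)\subset X$ a bounded sequence with $\liminf_k\|x_k-x\|>0$. Then $x_k\rightharpoondown x$ if and only if $(x_k-x)^*\rightharpoonup0$ weakly in $X^*$.
   Context: $x_k\rightharpoondown x$ (Δ-convergence) means: for every $y\in X$, $\limsup_{k\to\infty}(\|x_k-x\|-\|x_k-y\|)\le0$. For $z\in X\setminus\{0\}$, $z^*$ denotes the unique element of $X^*$ with $\|z^*\|=1$ and $\langle z^*,z\rangle=\|z\|$ (unique since $X^*$ is strictly convex); $(x_k-x)^*$ is defined for all large $k$. *)

(* Defs.v *)
From Stdlib Require Import Reals.
Open Scope R_scope.

Record NormedSpace := {
  carrier :> Type;
  vadd : carrier -> carrier -> carrier;
  vzero : carrier;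
  vopp : carrier -> carrier;
  vscal : R -> carrier -> carrier;
  vnorm : carrier -> R;
  vadd_assoc : forall x y z, vadd x (vadd y z) = vadd (vadd x y) z;
  vadd_comm : forall x y, vadd x y = vadd y x;
  vadd_0 : forall x, vadd x vzero = x;
  vadd_opp : forall x, vadd x (vopp x) = vzero;
  vscal_1 : forall x, vscal 1 x = x;
  vscal_assoc : forall a b x, vscal a (vscal b x) = vscal (a * b) x;
  vscal_distr_v : forall a x y, vscal a (vadd x y) = vadd (vscal a x) (vscal a y);
  vscal_distr_s : forall a b x, vscal (a + b) x = vadd (vscal a x) (vscal b x);
  vnorm_nonneg : forall x, 0 <= vnorm x;
  vnorm_eq0 : forall x, vnorm x = 0 -> x = vzero;
  vnorm_scal : forall a x, vnorm (vscal a x) = Rabs a * vnorm x;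
  vnorm_triangle : forall x y, vnorm (vadd x y) <= vnorm x + vnorm y
}.

Arguments vadd {n}. Arguments vzero {n}. Arguments vopp {n}.
Arguments vscal {n}. Arguments vnorm {n}.

Definition vsub {X : NormedSpace} (x y : X) : X := vadd x (vopp y).

Definition is_Banach (X : NormedSpace) : Prop :=
  forall u : nat -> X,
    (forall eps, 0 < eps -> exists N, forall m n, (m >= N)%nat -> (n >= N)%nat ->
        vnorm (vsub (u m) (u n)) < eps) ->
    exists l : X, forall eps, 0 < eps -> exists N, forall n, (n >= N)%nat ->
        vnorm (vsub (u n) l) < eps.

Definition uniformly_convex (X : NormedSpace) : Prop :=
  forall eps, 0 < eps <= 2 -> exists delta, 0 < delta /\
    forall x y : X, vnorm x <= 1 -> vnorm y <= 1 -> vnorm (vsub x y) >= eps ->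
      vnorm (vscal (/2) (vadd x y)) <= 1 - delta.

(* Uniform smoothness: rho_X(t)/t -> 0 as t -> 0+, where
   rho_X(t) = sup { (||x+ty|| + ||x-ty||)/2 - 1 : ||x|| = ||y|| = 1 }. *)
Definition uniformly_smooth (X : NormedSpace) : Prop :=
  forall eps, 0 < eps -> exists tau, 0 < tau /\
    forall t, 0 < t < tau -> forall x y : X, vnorm x = 1 -> vnorm y = 1 ->
      (vnorm (vadd x (vscal t y)) + vnorm (vsub x (vscal t y))) / 2 - 1 <= eps * t.

Definition is_linear {X : NormedSpace} (f : X -> R) : Prop :=
  (forall x y, f (vadd x y) = f x + f y) /\ (forall a x, f (vscal a x) = a * f x).

Definition in_dual {X : NormedSpace} (f : X -> R) : Prop :=
  is_linear f /\ exists M, forall x, Rabs (f x) <= M * vnorm x.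

Definition dual_norm_is {X : NormedSpace} (f : X -> R) (r : R) : Prop :=
  is_lub (fun s => exists x : X, vnorm x <= 1 /\ s = Rabs (f x)) r.

Definition dadd {X : NormedSpace} (f g : X -> R) : X -> R := fun x => f x + g x.
Definition dscal {X : NormedSpace} (a : R) (f : X -> R) : X -> R := fun x => a * f x.

Definition in_bidual {X : NormedSpace} (Psi : (X -> R) -> R) : Prop :=
  (forall f g, in_dual f -> in_dual g -> Psi (dadd f g) = Psi f + Psi g) /\
  (forall a f, in_dual f -> Psi (dscal a f) = a * Psi f) /\
  (exists M, forall f r, in_dual f -> dual_norm_is f r -> Rabs (Psi f) <= M * r).

Definition weakly_to_zero_dual {X : NormedSpace} (phi : nat -> X -> R) : Prop :=
  forall Psi, in_bidual Psi -> Un_cv (fun k => Psi (phi k)) 0.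

Definition is_star {X : NormedSpace} (z : X) (f : X -> R) : Prop :=
  in_dual f /\ dual_norm_is f 1 /\ f z = vnorm z.

Definition Delta_conv {X : NormedSpace} (xs : nat -> X) (x : X) : Prop :=
  forall y : X, forall eps, 0 < eps -> exists N, forall k, (k >= N)%nat ->
    vnorm (vsub (xs k) x) - vnorm (vsub (xs k) y) <= eps.

Definition bounded_seq {X : NormedSpace} (xs : nat -> X) : Prop :=
  exists M, forall k, vnorm (xs k) <= M.

Definition liminf_dist_pos {X : NormedSpace} (xs : nat -> X) (x : X) : Prop :=
  exists c, 0 < c /\ exists N, forall k, (k >= N)%nat -> c <= vnorm (vsub (xs k) x).

(* Main.v *)
Require Import Defs.
From Stdlib Require Import Reals Lra Lia Classical ClassicalEpsilon.
Open Scope R_scope.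

Arguments vadd_assoc {n}. Arguments vadd_comm {n}. Arguments vadd_0 {n}.
Arguments vadd_opp {n}. Arguments vscal_1 {n}. Arguments vscal_assoc {n}.
Arguments vscal_distr_v {n}. Arguments vscal_distr_s {n}. Arguments vnorm_nonneg {n}.
Arguments vnorm_eq0 {n}. Arguments vnorm_scal {n}. Arguments vnorm_triangle {n}.

Lemma vadd_0l {X : NormedSpace} (a : X) : vadd vzero a = a.
Proof. rewrite vadd_comm. apply vadd_0. Qed.

Lemma vadd_cancel_l {X : NormedSpace} (a b c : X) : vadd a b = vadd a c -> b = c.
Proof.
  intro H.
  transitivity (vadd (vadd (vopp a) a) b).
  { rewrite (vadd_comm (vopp a) a), vadd_opp, vadd_0l; reflexivity. }
  rewrite <- vadd_assoc, H, vadd_assoc, (vadd_comm (vopp a) a), vadd_opp, vadd_0l.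
  reflexivity.
Qed.

Lemma vscal_0 {X : NormedSpace} (a : X) : vscal 0 a = vzero.
Proof.
  pose proof (vscal_distr_s 0 0 a) as H. rewrite Rplus_0_r in H.
  apply (vadd_cancel_l (vscal 0 a)). rewrite vadd_0. symmetry; exact H.
Qed.

Lemma vopp_scal {X : NormedSpace} (a : X) : vopp a = vscal (-1) a.
Proof.
  apply (vadd_cancel_l a). rewrite vadd_opp.
  rewrite <- (vscal_0 a). replace 0 with (1 + -1) by ring.
  rewrite vscal_distr_s, vscal_1. reflexivity.
Qed.

Lemma vnorm_0 {X : NormedSpace} : vnorm (@vzero X) = 0.
Proof.
  assert (H : vnorm (vscal 0 (@vzero X)) = 0) by (rewrite vnorm_scal, Rabs_R0; ring).
  rewrite vscal_0 in H. exact H.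
Qed.

Lemma vnorm_opp {X : NormedSpace} (a : X) : vnorm (vopp a) = vnorm a.
Proof. rewrite vopp_scal, vnorm_scal, Rabs_left by lra. ring. Qed.

Lemma vopp_add {X : NormedSpace} (a b : X) : vopp (vadd a b) = vadd (vopp a) (vopp b).
Proof. rewrite !vopp_scal, vscal_distr_v. reflexivity. Qed.

Lemma vopp_opp {X : NormedSpace} (a : X) : vopp (vopp a) = a.
Proof. rewrite !vopp_scal, vscal_assoc. replace (-1 * -1) with 1 by ring. apply vscal_1. Qed.

Lemma vscal_opp {X : NormedSpace} c (a : X) : vscal c (vopp a) = vopp (vscal c a).
Proof. rewrite !vopp_scal, !vscal_assoc. f_equal. ring. Qed.

Lemma vsub_add {X : NormedSpace} (a b c : X) : vsub a (vadd b c) = vsub (vsub a b) c.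
Proof. unfold vsub. rewrite vopp_add, vadd_assoc. reflexivity. Qed.

Lemma tri_sub {X : NormedSpace} (a b : X) : vnorm b <= vnorm a + vnorm (vsub a b).
Proof.
  assert (E : b = vadd a (vopp (vsub a b))).
  { unfold vsub. rewrite vopp_add, vopp_opp, vadd_assoc, vadd_opp, vadd_0l. reflexivity. }
  rewrite E at 1. eapply Rle_trans. apply vnorm_triangle. rewrite vnorm_opp. lra.
Qed.

Lemma vsub_scal_norm {X : NormedSpace} (v z : X) t : vnorm (vsub v (vscal t z)) <= vnorm v + Rabs t * vnorm z.
Proof. unfold vsub. eapply Rle_trans. apply vnorm_triangle. rewrite vnorm_opp, vnorm_scal. lra. Qed.

Lemma scal_sub_eq {X : NormedSpace} (v z : X) a b c : a * b = c ->
  vscal a (vsub v (vscal b z)) = vsub (vscal a v) (vscal c z).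
Proof.
  intro H. unfold vsub. rewrite vscal_distr_v, vscal_opp, vscal_assoc, H. reflexivity.
Qed.

Lemma lin_0 {X : NormedSpace} (f : X -> R) : is_linear f -> f vzero = 0.
Proof. intros [_ Hs]. rewrite <- (vscal_0 (@vzero X)), Hs. ring. Qed.

Lemma lin_opp {X : NormedSpace} (f : X -> R) a : is_linear f -> f (vopp a) = - f a.
Proof. intros [_ Hs]. rewrite vopp_scal, Hs. ring. Qed.

Lemma lin_sub {X : NormedSpace} (f : X -> R) a b : is_linear f -> f (vsub a b) = f a - f b.
Proof. intro H. unfold vsub. rewrite (proj1 H), lin_opp by exact H. ring. Qed.

Lemma lin_add {X : NormedSpace} (f : X -> R) a b : is_linear f -> f (vadd a b) = f a + f b.
Proof. intro H. apply (proj1 H). Qed.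

Lemma lin_scal {X : NormedSpace} (f : X -> R) c a : is_linear f -> f (vscal c a) = c * f a.
Proof. intro H. apply (proj2 H). Qed.

Lemma vnorm_pos_ne {X : NormedSpace} (a : X) : vnorm a <> 0 -> 0 < vnorm a.
Proof. pose proof (vnorm_nonneg a). lra. Qed.

Lemma lub_bound {X : NormedSpace} (f : X -> R) r : is_linear f -> dual_norm_is f r ->
  forall x, Rabs (f x) <= r * vnorm x.
Proof.
  intros Hl [Hub _] x.
  destruct (Req_dec (vnorm x) 0) as [H0|H0].
  - apply vnorm_eq0 in H0. subst x. rewrite lin_0 by exact Hl. rewrite vnorm_0, Rabs_R0. lra.
  - pose proof (vnorm_pos_ne x H0) as Hp.
    assert (H1 : Rabs (f (vscal (/ vnorm x) x)) <= r).
    { apply Hub. exists (vscal (/ vnorm x) x). split; [|reflexivity].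
      rewrite vnorm_scal, Rabs_right by (left; apply Rinv_0_lt_compat; lra).
      rewrite Rinv_l by lra. lra. }
    rewrite lin_scal, Rabs_mult, Rabs_right in H1 by (assumption || (left; apply Rinv_0_lt_compat; lra)).
    apply (Rmult_le_reg_l (/ vnorm x)). apply Rinv_0_lt_compat; lra.
    replace (/ vnorm x * (r * vnorm x)) with r by (field; lra). exact H1.
Qed.

Lemma dn_exists {X : NormedSpace} (f : X -> R) : in_dual f -> exists r, dual_norm_is f r.
Proof.
  intros [Hl [M HM]].
  assert (Hb : bound (fun s => exists x : X, vnorm x <= 1 /\ s = Rabs (f x))).
  { exists (Rabs M). intros s [x [Hx ->]]. eapply Rle_trans. apply HM.
    pose proof (vnorm_nonneg x). pose proof (Rle_abs M). pose proof (Rabs_pos M). nra. }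
  assert (He : exists s, (fun s => exists x : X, vnorm x <= 1 /\ s = Rabs (f x)) s).
  { exists (Rabs (f vzero)), vzero. rewrite vnorm_0. split; [lra|reflexivity]. }
  destruct (completeness _ Hb He) as [r Hr]. exists r. exact Hr.
Qed.

Definition dn {X : NormedSpace} (f : X -> R) : R := epsilon (inhabits 0) (fun r => dual_norm_is f r).

Lemma dn_spec {X : NormedSpace} (f : X -> R) : in_dual f -> dual_norm_is f (dn f).
Proof. intro H. unfold dn. apply epsilon_spec. apply dn_exists, H. Qed.

Lemma dn_unique {X : NormedSpace} (f : X -> R) r : in_dual f -> dual_norm_is f r -> r = dn f.
Proof. intros H Hr. eapply is_lub_u. exact Hr. apply dn_spec, H. Qed.

Lemma dn_bound {X : NormedSpace} (f : X -> R) x : in_dual f -> Rabs (f x) <= dn f * vnorm x.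
Proof. intro H. apply lub_bound. apply H. apply dn_spec, H. Qed.

Lemma dn_nonneg {X : NormedSpace} (f : X -> R) : in_dual f -> 0 <= dn f.
Proof.
  intro H. destruct (dn_spec f H) as [Hub _]. apply Hub. exists vzero.
  rewrite vnorm_0, lin_0 by apply H. rewrite Rabs_R0. split; [lra|reflexivity].
Qed.

Lemma dn_bound1 {X : NormedSpace} (f : X -> R) x : in_dual f -> dn f <= 1 -> f x <= vnorm x.
Proof. intros H H1. pose proof (dn_bound f x H). pose proof (Rle_abs (f x)).
  pose proof (vnorm_nonneg x). pose proof (dn_nonneg f H). nra. Qed.

Lemma dn_le {X : NormedSpace} (f : X -> R) a : in_dual f ->
  (forall x, vnorm x <= 1 -> f x <= a) -> dn f <= a.
Proof.
  intros H Ha. destruct (dn_spec f H) as [_ Hl]. apply Hl.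
  intros s [x [Hx ->]]. apply Rabs_le. split.
  - pose proof (Ha (vopp x)) as Ho. rewrite vnorm_opp, lin_opp in Ho by apply H. specialize (Ho Hx). lra.
  - apply Ha, Hx.
Qed.

Lemma dn_approx {X : NormedSpace} (f : X -> R) eps : in_dual f -> 0 < dn f -> 0 < eps ->
  exists x, vnorm x = 1 /\ f x > dn f - eps.
Proof.
  intros H Hp He. set (e := Rmin eps (dn f)).
  assert (He1 : e <= eps) by apply Rmin_l. assert (He2 : e <= dn f) by apply Rmin_r.
  assert (He3 : 0 < e) by (apply Rmin_glb_lt; lra).
  assert (Hx : exists x, vnorm x <= 1 /\ f x > dn f - e).
  { apply NNPP. intro Hn. destruct (dn_spec f H) as [_ Hl].
    assert (dn f <= dn f - e); [|lra]. apply Hl. intros s [x [Hx ->]].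
    destruct (Rle_or_lt 0 (f x)).
    - rewrite Rabs_right by lra. apply Rnot_lt_le. intro. apply Hn. exists x. split; lra.
    - rewrite Rabs_left by lra. apply Rnot_lt_le. intro. apply Hn. exists (vopp x).
      rewrite vnorm_opp, lin_opp by apply H. split; lra. }
  destruct Hx as [x [Hx1 Hx2]].
  assert (Hn : vnorm x <> 0).
  { intro Hz. apply vnorm_eq0 in Hz. subst x. rewrite lin_0 in Hx2 by apply H. lra. }
  pose proof (vnorm_pos_ne x Hn) as Hnp.
  exists (vscal (/ vnorm x) x). split.
  - rewrite vnorm_scal, Rabs_right by (left; apply Rinv_0_lt_compat; lra). field. lra.
  - rewrite lin_scal by apply H.
    assert (f x <= / vnorm x * f x); [|lra].
    replace (f x) with (1 * f x) at 1 by ring. apply Rmult_le_compat_r. lra.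
    rewrite <- Rinv_1. apply Rinv_le_contravar; lra.
Qed.

Definition dsub {X : NormedSpace} (f g : X -> R) : X -> R := dadd f (dscal (-1) g).

Lemma in_dual_add {X : NormedSpace} (f g : X -> R) : in_dual f -> in_dual g -> in_dual (dadd f g).
Proof.
  intros [[Ha Hs] [M HM]] [[Ga Gs] [N HN]]. unfold dadd. split; [split|].
  - intros. rewrite Ha, Ga. ring.
  - intros. rewrite Hs, Gs. ring.
  - exists (M + N). intros x. eapply Rle_trans. apply Rabs_triang.
    specialize (HM x). specialize (HN x). lra.
Qed.

Lemma in_dual_scal {X : NormedSpace} a (f : X -> R) : in_dual f -> in_dual (dscal a f).
Proof.
  intros [[Ha Hs] [M HM]]. unfold dscal. split; [split|].
  - intros. rewrite Ha. ring.
  - intros. rewrite Hs. ring.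
  - exists (Rabs a * M). intros x. rewrite Rabs_mult. specialize (HM x).
    pose proof (Rabs_pos a). rewrite Rmult_assoc. apply Rmult_le_compat_l; lra.
Qed.

Lemma in_dual_sub {X : NormedSpace} (f g : X -> R) : in_dual f -> in_dual g -> in_dual (dsub f g).
Proof. intros. apply in_dual_add; auto. apply in_dual_scal; auto. Qed.

Lemma in_dual_zero {X : NormedSpace} : in_dual (fun _ : X => 0).
Proof. split; [split|]. intros; ring. intros; ring. exists 0. intros. rewrite Rabs_R0. lra. Qed.

Lemma Psi_add {X : NormedSpace} (Psi : (X -> R) -> R) f g : in_bidual Psi -> in_dual f -> in_dual g ->
  Psi (dadd f g) = Psi f + Psi g.
Proof. intros [H _]. apply H. Qed.

Lemma Psi_scal {X : NormedSpace} (Psi : (X -> R) -> R) a f : in_bidual Psi -> in_dual f ->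
  Psi (dscal a f) = a * Psi f.
Proof. intros [_ [H _]]. apply H. Qed.

Lemma Psi_sub {X : NormedSpace} (Psi : (X -> R) -> R) f g : in_bidual Psi -> in_dual f -> in_dual g ->
  Psi (dsub f g) = Psi f - Psi g.
Proof. intros. unfold dsub. rewrite Psi_add, Psi_scal; auto. ring. apply in_dual_scal; auto. Qed.

Lemma Psi_bound {X : NormedSpace} (Psi : (X -> R) -> R) : in_bidual Psi ->
  exists M, 0 <= M /\ forall f, in_dual f -> Rabs (Psi f) <= M * dn f.
Proof.
  intros [_ [_ [M HM]]]. exists (Rabs M). split. apply Rabs_pos.
  intros f Hf. eapply Rle_trans. apply HM. exact Hf. apply dn_spec, Hf.
  apply Rmult_le_compat_r. apply dn_nonneg, Hf. apply Rle_abs.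
Qed.

Lemma inv_small (a : R) : 0 < a -> exists N : nat, forall n, (n >= N)%nat -> / (INR n + 1) < a.
Proof.
  intro Ha. destruct (archimed_cor1 a Ha) as [N [HN HN0]]. exists N. intros n Hn.
  apply le_INR in Hn. apply lt_INR in HN0. simpl in HN0.
  eapply Rle_lt_trans; [|exact HN]. apply Rinv_le_contravar; lra.
Qed.

Lemma lim_le (u : nat -> R) l a N : Un_cv u l -> (forall n, (n >= N)%nat -> u n <= a) -> l <= a.
Proof.
  intros Hu Ha. apply Rnot_lt_le. intro Hl.
  destruct (Hu (l - a)) as [N1 HN1]. lra.
  specialize (HN1 (max N N1) (Nat.le_max_r _ _)). specialize (Ha (max N N1) (Nat.le_max_l _ _)).
  unfold R_dist in HN1. apply Rabs_def2 in HN1. lra.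
Qed.

Lemma UCL {X : NormedSpace} (Hconv : uniformly_convex X) (f : X -> R) :
  in_dual f -> dn f <= 1 -> forall eps, 0 < eps -> exists delta, 0 < delta /\
  forall a b, vnorm a <= 1 -> vnorm b <= 1 -> f a + f b > 2 - delta -> vnorm (vsub a b) < eps.
Proof.
  intros Hf H1 eps He. set (e := Rmin eps 2).
  assert (e <= eps) by apply Rmin_l. assert (e <= 2) by apply Rmin_r.
  assert (0 < e) by (apply Rmin_glb_lt; lra).
  destruct (Hconv e ltac:(lra)) as [d [Hd Hc]].
  exists (2 * d). split. lra. intros a b Ha Hb Hab.
  apply Rnot_le_lt. intro Hn.
  pose proof (Hc a b Ha Hb ltac:(lra)) as Hm.
  pose proof (dn_bound1 f (vscal (/2) (vadd a b)) Hf H1) as Hq.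
  rewrite lin_scal, lin_add in Hq by apply Hf. lra.
Qed.

Lemma UCD {X : NormedSpace} (Hsmooth : uniformly_smooth X) :
  forall eps, 0 < eps -> exists delta, 0 < delta /\
  forall f g : X -> R, in_dual f -> in_dual g -> dn f <= 1 -> dn g <= 1 ->
    dn (dadd f g) > 2 - delta -> dn (dsub f g) < eps.
Proof.
  intros eps He. destruct (Hsmooth (eps / 8) ltac:(lra)) as [tau [Htau Hs]].
  set (t := tau / 2). set (d := Rmin 1 (t * eps / 4)).
  assert (d <= 1) by apply Rmin_l. assert (d <= t * eps / 4) by apply Rmin_r.
  assert (0 < t) by (unfold t; lra).
  assert (0 < d) by (apply Rmin_glb_lt; nra).
  exists d. split. lra. intros f g Hf Hg Hf1 Hg1 Hfg.
  apply Rnot_le_lt. intro Hn.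
  pose proof (in_dual_add f g Hf Hg) as Hfg'. pose proof (in_dual_sub f g Hf Hg) as Hfg''.
  destruct (dn_approx (dadd f g) (dn (dadd f g) - (2 - d)) Hfg' ltac:(lra) ltac:(lra)) as [y [Hy1 Hy2]].
  destruct (dn_approx (dsub f g) (eps / 2) Hfg'' ltac:(lra) ltac:(lra)) as [x [Hx1 Hx2]].
  change ((dadd f g) y) with (f y + g y) in Hy2.
  change ((dsub f g) x) with (f x + -1 * g x) in Hx2.
  pose proof (Hs t ltac:(unfold t; lra) y x Hy1 Hx1) as Hst.
  pose proof (dn_bound1 f (vadd y (vscal t x)) Hf Hf1) as Q1.
  pose proof (dn_bound1 g (vsub y (vscal t x)) Hg Hg1) as Q2.
  rewrite lin_add, lin_scal in Q1 by apply Hf.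
  rewrite lin_sub, lin_scal in Q2 by apply Hg.
  assert (t * (f x - g x) >= t * (eps / 2)) by (apply Rmult_ge_compat_l; lra).
  lra.
Qed.

Lemma choice_fun {A B : Type} (P : A -> B -> Prop) : (forall a, exists b, P a b) -> exists f, forall a, P a (f a).
Proof.
  intro H. exists (fun a => proj1_sig (constructive_indefinite_description _ (H a))).
  intro a. exact (proj2_sig (constructive_indefinite_description _ (H a))).
Qed.

Lemma cv_const (c : R) : Un_cv (fun _ => c) c.
Proof. intros eps He. exists 0%nat. intros. unfold R_dist. rewrite Rminus_diag, Rabs_R0. exact He. Qed.

Lemma lim_ge (u : nat -> R) l a N : Un_cv u l -> (forall n, (n >= N)%nat -> a <= u n) -> a <= l.
Proof.
  intros Hu Ha. apply Rnot_lt_le. intro Hl.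
  destruct (Hu (a - l)) as [N1 HN1]. lra.
  specialize (HN1 (max N N1) (Nat.le_max_r _ _)). specialize (Ha (max N N1) (Nat.le_max_l _ _)).
  unfold R_dist in HN1. apply Rabs_def2 in HN1. lra.
Qed.

Lemma dn_zero {X : NormedSpace} : dn (fun _ : X => 0) = 0.
Proof.
  apply Rle_antisym. apply dn_le. apply in_dual_zero. intros; lra.
  apply dn_nonneg, in_dual_zero.
Qed.

Lemma inv_pos_nat (n : nat) : 0 < / (INR n + 1).
Proof. pose proof (pos_INR n). apply Rinv_0_lt_compat. lra. Qed.

Lemma reflexive {X : NormedSpace} (HB : is_Banach X) (Hconv : uniformly_convex X)
  (Hsmooth : uniformly_smooth X) (Psi : (X -> R) -> R) :
  in_bidual Psi -> exists z : X, forall f, in_dual f -> Psi f = f z.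
Proof.
  intro HP. destruct (Psi_bound Psi HP) as [M [HM0 HM]].
  set (E := fun s => exists f, in_dual f /\ dn f <= 1 /\ s = Psi f).
  assert (Psi0 : forall f, in_dual f -> dn f = 0 -> Psi f = 0).
  { intros f Hf H0. pose proof (HM f Hf) as H1. rewrite H0, Rmult_0_r in H1.
    pose proof (Rle_abs (Psi f)). pose proof (Rle_abs (- Psi f)). rewrite Rabs_Ropp in *. lra. }
  assert (HEb : bound E).
  { exists M. intros s [f [Hf [H1 ->]]]. pose proof (HM f Hf). pose proof (Rle_abs (Psi f)).
    pose proof (dn_nonneg f Hf). nra. }
  assert (HEn : E 0).
  { exists (fun _ => 0). split. apply in_dual_zero. rewrite dn_zero. split. lra.
    symmetry. apply Psi0. apply in_dual_zero. apply dn_zero. }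
  destruct (completeness E HEb (ex_intro _ 0 HEn)) as [L [HLu HLl]].
  assert (HL0 : 0 <= L) by (apply HLu; exact HEn).
  assert (PsiL : forall h, in_dual h -> Psi h <= L * dn h).
  { intros h Hh. destruct (Req_dec (dn h) 0) as [Hz|Hz].
    - rewrite Psi0 by auto. rewrite Hz; lra.
    - pose proof (dn_nonneg h Hh). assert (Hp : 0 < dn h) by lra.
      assert (H1 : Psi (dscal (/ dn h) h) <= L).
      { apply HLu. exists (dscal (/ dn h) h). split. apply in_dual_scal, Hh. split; [|reflexivity].
        apply dn_le. apply in_dual_scal, Hh. intros x Hx. unfold dscal.
        pose proof (dn_bound h x Hh). pose proof (Rle_abs (h x)).
        apply (Rmult_le_reg_l (dn h)); [lra|]. rewrite <- Rmult_assoc, Rinv_r, Rmult_1_l, Rmult_1_r by lra.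
        nra. }
      rewrite Psi_scal in H1 by auto.
      replace (Psi h) with (dn h * (/ dn h * Psi h)) by (field; lra).
      rewrite (Rmult_comm L). apply Rmult_le_compat_l; lra. }
  destruct (Req_dec L 0) as [HLz | HLnz].
  { exists vzero. intros f Hf. rewrite lin_0 by apply Hf. pose proof (PsiL f Hf).
    pose proof (PsiL (dscal (-1) f) (in_dual_scal _ _ Hf)) as H2. rewrite Psi_scal in H2 by auto.
    rewrite HLz in *. lra. }
  assert (HLp : 0 < L) by lra.
  assert (Hfs : forall n : nat, exists f, in_dual f /\ dn f <= 1 /\ Psi f > L - / (INR n + 1)).
  { intro n. apply NNPP. intro Hn. pose proof (inv_pos_nat n).
    assert (L <= L - / (INR n + 1)); [|lra]. apply HLl. intros s [f [Hf [H1 ->]]].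
    apply Rnot_lt_le. intro. apply Hn. exists f. split; [exact Hf | split; [exact H1 | lra]]. }
  destruct (choice_fun _ Hfs) as [fs Hfs'].
  assert (Hfsd : forall n, in_dual (fs n)) by (intro n; apply (Hfs' n)).
  assert (Hfs1 : forall n, dn (fs n) <= 1) by (intro n; apply (Hfs' n)).
  assert (Hcau : forall eps, 0 < eps -> exists N, forall n m, (n >= N)%nat -> (m >= N)%nat ->
            dn (dsub (fs n) (fs m)) < eps).
  { intros eps He. destruct (UCD Hsmooth eps He) as [d [Hd Hu]].
    destruct (inv_small (d * L / 2)) as [N HN]. nra.
    exists N. intros n m Hn Hm. apply Hu; auto.
    pose proof (PsiL _ (in_dual_add _ _ (Hfsd n) (Hfsd m))) as Q.
    rewrite Psi_add in Q by auto.
    pose proof (proj2 (proj2 (Hfs' n))). pose proof (proj2 (proj2 (Hfs' m))).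
    pose proof (HN n Hn). pose proof (HN m Hm).
    apply (Rmult_lt_reg_l L); [lra|]. lra. }
  assert (Hpt : forall x, exists l, Un_cv (fun n => fs n x) l).
  { intro x. destruct (R_complete (fun n => fs n x)) as [l Hl]. 2: exists l; exact Hl.
    intros eps He. pose proof (vnorm_nonneg x).
    destruct (Hcau (eps / (vnorm x + 1))) as [N HN].
    { apply Rdiv_lt_0_compat; lra. }
    exists N. intros n m Hn Hm. unfold R_dist. specialize (HN n m Hn Hm).
    pose proof (dn_bound (dsub (fs n) (fs m)) x (in_dual_sub _ _ (Hfsd n) (Hfsd m))) as Q.
    change ((dsub (fs n) (fs m)) x) with (fs n x + -1 * fs m x) in Q.
    replace (fs n x - fs m x) with (fs n x + -1 * fs m x) by ring.
    pose proof (dn_nonneg _ (in_dual_sub _ _ (Hfsd n) (Hfsd m))).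
    assert (dn (dsub (fs n) (fs m)) * (vnorm x + 1) < eps).
    { replace eps with (eps / (vnorm x + 1) * (vnorm x + 1)) by (field; lra).
      apply Rmult_lt_compat_r; lra. }
    nra. }
  destruct (choice_fun _ Hpt) as [f0 Hf0].
  assert (Hf0l : is_linear f0).
  { split.
    - intros a b. apply (UL_sequence (fun n => fs n (vadd a b))). apply Hf0.
      apply (Un_cv_ext (fun n => fs n a + fs n b)).
      { intro n. symmetry. apply lin_add, (Hfsd n). }
      apply CV_plus; apply Hf0.
    - intros c a. apply (UL_sequence (fun n => fs n (vscal c a))). apply Hf0.
      apply (Un_cv_ext (fun n => c * fs n a)).
      { intro n. symmetry. apply lin_scal, (Hfsd n). }
      apply CV_mult. apply cv_const. apply Hf0. }
  assert (Hf0b : forall x, Rabs (f0 x) <= vnorm x).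
  { intro x. apply Rabs_le. split.
    - apply (lim_ge (fun n => fs n x) _ _ 0%nat (Hf0 x)). intros n _.
      pose proof (dn_bound1 (fs n) (vopp x) (Hfsd n) (Hfs1 n)).
      rewrite lin_opp, vnorm_opp in H by apply (Hfsd n). lra.
    - apply (lim_le (fun n => fs n x) _ _ 0%nat (Hf0 x)). intros n _.
      apply dn_bound1; auto. }
  assert (Hf0d : in_dual f0).
  { split. exact Hf0l. exists 1. intro x. rewrite Rmult_1_l. apply Hf0b. }
  assert (Hf0n : dn f0 <= 1).
  { apply dn_le. exact Hf0d. intros x Hx. pose proof (Hf0b x). pose proof (Rle_abs (f0 x)). lra. }
  assert (Hunif : forall eps, 0 < eps -> exists N, forall n, (n >= N)%nat -> dn (dsub (fs n) f0) <= eps).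
  { intros eps He. destruct (Hcau eps He) as [N HN]. exists N. intros n Hn.
    apply dn_le. apply in_dual_sub; auto. intros x Hx.
    change (dsub (fs n) f0 x) with (fs n x + -1 * f0 x).
    apply (lim_le (fun m => fs n x + -1 * fs m x) _ _ N).
    { apply CV_plus. apply cv_const. apply CV_mult. apply cv_const. apply Hf0. }
    intros m Hm. specialize (HN n m Hn Hm).
    pose proof (dn_bound (dsub (fs n) (fs m)) x (in_dual_sub _ _ (Hfsd n) (Hfsd m))) as Q.
    change ((dsub (fs n) (fs m)) x) with (fs n x + -1 * fs m x) in Q.
    pose proof (Rle_abs (fs n x + -1 * fs m x)).
    pose proof (dn_nonneg _ (in_dual_sub _ _ (Hfsd n) (Hfsd m))). pose proof (vnorm_nonneg x).
    nra. }
  assert (HPf0 : Psi f0 = L).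
  { apply Rle_antisym.
    - pose proof (PsiL f0 Hf0d). pose proof (dn_nonneg f0 Hf0d). nra.
    - apply Rnot_lt_le; intro Hlt. set (e := L - Psi f0).
      destruct (Hunif (e / (2 * (M + 1)))) as [N1 HN1].
      { apply Rdiv_lt_0_compat; unfold e; lra. }
      destruct (inv_small (e / 2)) as [N2 HN2]. unfold e; lra.
      set (n := max N1 N2).
      specialize (HN1 n (Nat.le_max_l _ _)). specialize (HN2 n (Nat.le_max_r _ _)).
      pose proof (proj2 (proj2 (Hfs' n))) as Q1.
      pose proof (HM _ (in_dual_sub _ _ (Hfsd n) Hf0d)) as Q2.
      rewrite Psi_sub in Q2 by auto.
      pose proof (Rle_abs (Psi (fs n) - Psi f0)).
      assert (M * dn (dsub (fs n) f0) <= M * (e / (2 * (M + 1)))) by (apply Rmult_le_compat_l; lra).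
      assert (M * (e / (2 * (M + 1))) <= e / 2).
      { replace (M * (e / (2 * (M + 1)))) with (e / 2 * (M / (M + 1))) by (field; lra).
        assert (M / (M + 1) <= 1).
        { apply (Rmult_le_reg_r (M + 1)); [lra|]. unfold Rdiv. rewrite Rmult_assoc, Rinv_l by lra. lra. }
        assert (0 <= e / 2) by (unfold e; lra). nra. }
      unfold e in *. lra. }
  assert (Hdn1 : 1 <= dn f0).
  { pose proof (PsiL f0 Hf0d). rewrite HPf0 in H. apply (Rmult_le_reg_l L); lra. }
  assert (Hys : forall n : nat, exists y, vnorm y <= 1 /\ f0 y > 1 - / (INR n + 1)).
  { intro n. destruct (dn_approx f0 (/ (INR n + 1)) Hf0d ltac:(lra) (inv_pos_nat n)) as [y [Hy1 Hy2]].
    exists y. split; lra. }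
  destruct (choice_fun _ Hys) as [ys Hys'].
  destruct (HB ys) as [z0 Hz0].
  { intros eps He. destruct (UCL Hconv f0 Hf0d Hf0n eps He) as [d [Hd Hu]].
    destruct (inv_small (d / 2)) as [N HN]. lra. exists N. intros m n Hm Hn.
    apply Hu. apply (Hys' m). apply (Hys' n).
    pose proof (proj2 (Hys' m)). pose proof (proj2 (Hys' n)). pose proof (HN m Hm). pose proof (HN n Hn).
    lra. }
  assert (Hz0n : vnorm z0 <= 1).
  { apply Rnot_lt_le; intro Hlt. destruct (Hz0 (vnorm z0 - 1)) as [N HN]. lra.
    specialize (HN N (Nat.le_refl _)). pose proof (tri_sub (ys N) z0). pose proof (proj1 (Hys' N)). lra. }
  assert (Hz0f : f0 z0 = 1).
  { apply Rle_antisym.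
    - pose proof (dn_bound1 f0 z0 Hf0d Hf0n). lra.
    - apply Rnot_lt_le; intro Hlt. set (e := 1 - f0 z0).
      destruct (Hz0 (e / 2)) as [N1 HN1]. unfold e; lra.
      destruct (inv_small (e / 2)) as [N2 HN2]. unfold e; lra.
      set (n := max N1 N2).
      specialize (HN1 n (Nat.le_max_l _ _)). specialize (HN2 n (Nat.le_max_r _ _)).
      pose proof (proj2 (Hys' n)).
      pose proof (dn_bound1 f0 (vsub (ys n) z0) Hf0d Hf0n) as Q.
      rewrite lin_sub in Q by apply Hf0l. unfold e in *. lra. }
  assert (Hmain : forall g, in_dual g -> Psi g <= L * g z0).
  { intros g Hg. apply Rnot_lt_le; intro Hlt.
    set (eta := (Psi g - L * g z0) / (2 * L)).
    assert (Heta : 0 < eta) by (apply Rdiv_lt_0_compat; lra).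
    assert (HG : 0 <= dn g) by apply (dn_nonneg g Hg).
    destruct (UCL Hconv f0 Hf0d Hf0n (eta / ((dn g) + 1))) as [d [Hd Hu]].
    { apply Rdiv_lt_0_compat; lra. }
    set (t := d / (2 * (dn g) + 1)).
    assert (Ht : 0 < t) by (apply Rdiv_lt_0_compat; lra).
    assert (Ht2 : t * (2 * (dn g) + 1) = d) by (unfold t; field; lra).
    set (h := dadd f0 (dscal t g)).
    assert (Hh : in_dual h) by (apply in_dual_add; auto; apply in_dual_scal; auto).
    assert (Hdh : dn h <= 1 + t * (g z0 + eta)).
    { apply dn_le. exact Hh. intros x Hx. change (h x) with (f0 x + t * g x).
      pose proof (dn_bound1 f0 x Hf0d Hf0n).
      pose proof (dn_bound g x Hg). pose proof (Rle_abs (g x)).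
      assert (Hgx : g x <= (dn g)) by (nra).
      pose proof (dn_bound g z0 Hg). pose proof (Rle_abs (- g z0)). rewrite Rabs_Ropp in *.
      assert (Hgz : - (dn g) <= g z0) by (pose proof (vnorm_nonneg z0); nra).
      destruct (Rlt_or_le (2 - d) (f0 x + f0 z0)) as [Hc|Hc].
      - pose proof (Hu x z0 Hx Hz0n Hc) as Hxz.
        pose proof (dn_bound g (vsub x z0) Hg) as Q. rewrite lin_sub in Q by apply Hg.
        pose proof (Rle_abs (g x - g z0)).
        assert ((dn g) * vnorm (vsub x z0) <= (dn g) * (eta / ((dn g) + 1))) by (apply Rmult_le_compat_l; lra).
        assert ((dn g) * (eta / ((dn g) + 1)) <= eta).
        { apply (Rmult_le_reg_r ((dn g) + 1)); [lra|]. unfold Rdiv.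
          rewrite Rmult_assoc, Rmult_assoc, Rinv_l by lra. nra. }
        assert (g x <= g z0 + eta) by (lra).
        assert (t * g x <= t * (g z0 + eta)) by (apply Rmult_le_compat_l; lra).
        lra.
      - assert (t * g x <= t * (dn g)) by (apply Rmult_le_compat_l; lra).
        assert (t * (- (dn g)) <= t * g z0) by (apply Rmult_le_compat_l; lra).
        assert (0 <= t * eta) by nra.
        assert (0 <= t * (dn g)) by nra.
        lra. }
    pose proof (PsiL h Hh) as Q. unfold h in Q, Hdh. rewrite Psi_add, Psi_scal in Q by (auto; apply in_dual_scal; auto).
    rewrite HPf0 in Q.
    assert (L * dn (dadd f0 (dscal t g)) <= L * (1 + t * (g z0 + eta))) by (apply Rmult_le_compat_l; lra).
    assert (t * Psi g <= t * (L * g z0 + L * eta)) by nra.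
    assert (Psi g <= L * g z0 + L * eta) by (apply (Rmult_le_reg_l t); lra).
    assert (L * eta = (Psi g - L * g z0) / 2) by (unfold eta; field; lra).
    lra. }
  exists (vscal L z0). intros g Hg. rewrite lin_scal by apply Hg. apply Rle_antisym.
  - apply Hmain, Hg.
  - pose proof (Hmain (dscal (-1) g) (in_dual_scal _ _ Hg)) as H. rewrite Psi_scal in H by auto.
    unfold dscal in H. lra.
Qed.

Lemma smooth_step {X : NormedSpace} (Hsmooth : uniformly_smooth X) (z : X) c e :
  0 < c -> 0 < e -> exists t, 0 < t /\ forall (J : X -> R) v, in_dual J -> dn J <= 1 ->
    J v = vnorm v -> c <= vnorm v -> t * (J z - e) <= vnorm v - vnorm (vsub v (vscal t z)).
Proof.
  intros Hc He. destruct (Req_dec (vnorm z) 0) as [Hz|Hz].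
  - exists 1. split. lra. intros J v HJ HJ1 HJv Hcv.
    pose proof (vsub_scal_norm v z 1). pose proof (dn_bound1 J z HJ HJ1).
    rewrite Hz in *. rewrite Rabs_R1 in H. lra.
  - pose proof (vnorm_pos_ne z Hz) as Hm. set (m := vnorm z) in *.
    destruct (Hsmooth (e / (2 * m))) as [tau [Htau Hs]].
    { apply Rdiv_lt_0_compat; lra. }
    exists (tau * c / (2 * m)). split.
    { apply Rdiv_lt_0_compat; nra. }
    intros J v HJ HJ1 HJv Hcv. set (t := tau * c / (2 * m)). set (n := vnorm v) in *.
    assert (Hn : 0 < n) by lra.
    set (s := t * m / n).
    assert (Hs0 : 0 < s) by (unfold s, t; apply Rdiv_lt_0_compat; [apply Rmult_lt_0_compat; [apply Rdiv_lt_0_compat; nra|lra]|lra]).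
    assert (Hs1 : s < tau).
    { unfold s, t. replace (tau * c / (2 * m) * m / n) with (tau / 2 * (c / n)) by (field; lra).
      assert (c / n <= 1). { apply (Rmult_le_reg_r n); [lra|]. unfold Rdiv. rewrite Rmult_assoc, Rinv_l by lra. lra. }
      assert (0 <= c / n) by (apply Rlt_le, Rdiv_lt_0_compat; lra). nra. }
    set (u := vscal (/ n) v). set (w := vscal (/ m) z).
    assert (Hu : vnorm u = 1).
    { unfold u. rewrite vnorm_scal, Rabs_right by (left; apply Rinv_0_lt_compat; lra). fold n. field. lra. }
    assert (Hw : vnorm w = 1).
    { unfold w. rewrite vnorm_scal, Rabs_right by (left; apply Rinv_0_lt_compat; lra). fold m. field. lra. }
    pose proof (Hs s (conj Hs0 Hs1) u w Hu Hw) as H1.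
    pose proof (dn_bound1 J (vadd u (vscal s w)) HJ HJ1) as Q1.
    rewrite lin_add, lin_scal in Q1 by apply HJ. unfold u, w in Q1.
    rewrite !lin_scal in Q1 by apply HJ. rewrite HJv in Q1.
    replace (/ n * n) with 1 in Q1 by (field; lra).
    assert (E : vsub u (vscal s w) = vscal (/ n) (vsub v (vscal t z))).
    { unfold u, w. rewrite vscal_assoc. symmetry. apply scal_sub_eq. unfold s. field. lra. }
    rewrite E, vnorm_scal, Rabs_right in H1 by (left; apply Rinv_0_lt_compat; lra).
    set (D := vnorm (vsub v (vscal t z))) in *.
    set (k := e / (2 * m) * s) in *.
    set (A := vnorm (vadd u (vscal s w))) in *.
    change (vnorm (vadd (vscal (/ n) v) (vscal s (vscal (/ m) z)))) with A in Q1.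
    assert (HD : / n * D <= 1 + 2 * k - s * (/ m * J z)) by lra.
    assert (Ek : n * (2 * k) = e * t) by (unfold k, s; field; lra).
    assert (Ej : n * (s * (/ m * J z)) = t * J z) by (unfold s; field; lra).
    assert (n * (/ n * D) <= n * (1 + 2 * k - s * (/ m * J z))) by (apply Rmult_le_compat_l; lra).
    replace (n * (/ n * D)) with D in H by (field; lra).
    nra.
Qed.

Lemma weak_star {X : NormedSpace} (Hsmooth : uniformly_smooth X) (x : X) (xs : nat -> X)
  (Hlim : liminf_dist_pos xs x) (J : nat -> X -> R)
  (HJ : exists N, forall k, (k >= N)%nat -> is_star (vsub (xs k) x) (J k)) :
  Delta_conv xs x -> forall z, Un_cv (fun k => J k z) 0.
Proof.
  intros HD z eps Heps. destruct Hlim as [c [Hc [N0 HN0]]]. destruct HJ as [N1 HN1].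
  set (e := eps / 4).
  destruct (smooth_step Hsmooth z c e Hc ltac:(unfold e; lra)) as [t1 [Ht1 H1]].
  destruct (smooth_step Hsmooth (vopp z) c e Hc ltac:(unfold e; lra)) as [t2 [Ht2 H2]].
  destruct (HD (vadd x (vscal t1 z)) (e * t1) ltac:(unfold e; nra)) as [N2 HN2].
  destruct (HD (vadd x (vscal t2 (vopp z))) (e * t2) ltac:(unfold e; nra)) as [N3 HN3].
  exists (max (max N0 N1) (max N2 N3)). intros k Hk.
  assert (k >= N0)%nat by lia. assert (k >= N1)%nat by lia.
  assert (k >= N2)%nat by lia. assert (k >= N3)%nat by lia.
  destruct (HN1 k H0) as [HJd [HJn HJv]].
  assert (HJ1 : dn (J k) <= 1) by (rewrite <- (dn_unique _ _ HJd HJn); lra).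
  specialize (HN0 k H). specialize (HN2 k H3). specialize (HN3 k H4).
  rewrite vsub_add in HN2, HN3.
  pose proof (H1 (J k) _ HJd HJ1 HJv HN0) as Q1.
  pose proof (H2 (J k) _ HJd HJ1 HJv HN0) as Q2.
  rewrite lin_opp in Q2 by apply HJd.
  assert (t1 * (J k z - e) <= t1 * e) by lra.
  assert (t2 * (- J k z - e) <= t2 * e) by lra.
  assert (J k z - e <= e) by (apply (Rmult_le_reg_l t1); lra).
  assert (- J k z - e <= e) by (apply (Rmult_le_reg_l t2); lra).
  unfold R_dist. rewrite Rminus_0_r. apply Rabs_def1; unfold e in *; lra.
Qed.

Theorem theorem3p8 (X : NormedSpace) (HB : is_Banach X)
  (Hconv : uniformly_convex X) (Hsmooth : uniformly_smooth X)
  (x : X) (xs : nat -> X) (Hbdd : bounded_seq xs) (Hlim : liminf_dist_pos xs x)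
  (J : nat -> X -> R)
  (HJ : exists N, forall k, (k >= N)%nat -> is_star (vsub (xs k) x) (J k)) :
  Delta_conv xs x <-> weakly_to_zero_dual J.
Proof.
  split.
  - intros HD Psi HP. destruct (reflexive HB Hconv Hsmooth Psi HP) as [z Hz].
    pose proof (weak_star Hsmooth x xs Hlim J HJ HD z) as Hw.
    destruct HJ as [N HN]. intros eps He. destruct (Hw eps He) as [N1 HN1].
    exists (max N N1). intros k Hk. rewrite Hz. apply HN1; lia.
    apply (HN k). lia.
  - intros HW y eps Heps.
    set (Psi := fun f : X -> R => f (vsub y x)).
    assert (HP : in_bidual Psi).
    { split; [|split].
      - intros f g _ _. reflexivity.
      - intros a f _. reflexivity.
      - exists (vnorm (vsub y x)). intros f r Hf Hr. unfold Psi.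
        pose proof (lub_bound f r (proj1 Hf) Hr (vsub y x)). lra. }
    destruct (HW Psi HP eps Heps) as [N1 HN1]. destruct HJ as [N HN].
    exists (max N N1). intros k Hk.
    destruct (HN k ltac:(lia)) as [HJd [HJn HJv]].
    assert (HJ1 : dn (J k) <= 1) by (rewrite <- (dn_unique _ _ HJd HJn); lra).
    specialize (HN1 k ltac:(lia)). unfold R_dist, Psi in HN1. rewrite Rminus_0_r in HN1.
    apply Rabs_def2 in HN1.
    pose proof (dn_bound1 (J k) (vsub (xs k) y) HJd HJ1) as Q.
    rewrite lin_sub in Q, HJv, HN1 by apply HJd.
    lra.
Qed.
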